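(* Let $n,m\ge 1$, let $R\in\mathbb{R}^{2n\times 2n}$ be symmetric, $C\in\mathbb{R}^{2m\times 2n}$, and $\Sigma\in\mathbb{R}^{2m\times 2m}$ real symplectic. Set $A=\mathbb{J}_{2n}R-\tfrac12 C^{\sharp}C$ and $B=-C^{\sharp}\Sigma$, and define $$\mathcal{C}=(B\; AB\;\cdots\;A^{2n-1}B),\qquad \mathcal{O}=\begin{pmatrix}C\\ CA\\ \vdots\\ CA^{2n-1}\end{pmatrix},$$ $$\tilde{\mathcal{C}}=(B\;(\mathbb{J}_{2n}R)B\;\cdots\;(\mathbb{J}_{2n}R)^{2n-1}B),\qquad \tilde{\mathcal{O}}=\begin{pmatrix}C\\ C(\mathbb{J}_{2n}R)\\ \vdots\\ C(\mathbb{J}_{2n}R)^{2n-1}\end{pmatrix}.$$ Then $\operatorname{Im}\tilde{\mathcal{C}}=\operatorname{Im}\mathcal{C}$ and $\operatorname{Ker}\tilde{\mathcal{O}}=\operatorname{Ker}\mathcal{O}$.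
   Context: $\mathbb{J}_{2k}=\begin{pmatrix}0_{k\times k}& I_k\\ -I_k & 0_{k\times k}\end{pmatrix}$. For a $2r\times 2s$ matrix $X$, $X^{\sharp}=-\mathbb{J}_{2s}X^{\dagger}\mathbb{J}_{2r}$ (for real $X$, $X^{\dagger}=X^{\top}$). A real $2k\times 2k$ matrix $T$ is symplectic if $TT^{\sharp}=T^{\sharp}T=I_{2k}$, equivalently $T^{\top}\mathbb{J}_{2k}T=\mathbb{J}_{2k}$. *)

(* Defs.v *)
From mathcomp Require Import all_boot all_order all_algebra.
From mathcomp Require Import reals.
Set Implicit Arguments. Unset Strict Implicit. Unset Printing Implicit Defensive.
Import Order.TTheory GRing.Theory Num.Theory.
Local Open Scope ring_scope.

Definition Jmx {R : pzRingType} (k : nat) : 'M[R]_(k + k) :=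
  block_mx 0 1%:M (- 1%:M) 0.

Definition sharp {R : pzRingType} (r s : nat) (X : 'M[R]_(r + r, s + s))
  : 'M[R]_(s + s, r + r) := - (Jmx s *m X^T *m Jmx r).

Definition symplectic {R : pzRingType} (k : nat) (T : 'M[R]_(k + k)) : Prop :=
  T *m sharp T = 1%:M /\ sharp T *m T = 1%:M.

Definition ctrb {R : pzRingType} (p q N : nat) (A : 'M[R]_p) (B : 'M[R]_(p, q))
  : 'M[R]_(p, \sum_(k < N) q) := \mxrow_(k < N) (A ^+ k *m B).

Definition obsv {R : pzRingType} (p q N : nat) (A : 'M[R]_p) (C : 'M[R]_(q, p))
  : 'M[R]_(\sum_(k < N) q, p) := \mxcol_(k < N) (C *m A ^+ k).

Definition colspace {R : pzRingType} (a b : nat) (M : 'M[R]_(a, b)) : 'cV[R]_a -> Prop :=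
  fun v => exists u : 'cV[R]_b, v = M *m u.
Definition nullspace {R : pzRingType} (a b : nat) (M : 'M[R]_(a, b)) : 'cV[R]_b -> Prop :=
  fun v => M *m v = 0.

(* Main.v *)
Require Import Defs.
From mathcomp Require Import all_boot all_order all_algebra.
From mathcomp Require Import reals.
Import Order.TTheory GRing.Theory Num.Theory.
Local Open Scope ring_scope.

Section Helpers.
Set Implicit Arguments.
Variable R : pzRingType.

Lemma krylov_c p q (A0 : 'M[R]_p) (B : 'M[R]_(p, q)) (F : 'M[R]_(q, p)) k :
  exists X : nat -> 'M[R]_q,
    (A0 + B *m F) ^+ k *m B = \sum_(i < k.+1) A0 ^+ i *m B *m X i.
Proof.
elim: k => [|k [X HX]].
  exists (fun _ => 1%:M); rewrite big_ord1 !expr0 mulmx1 //.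
set S := \sum_(i < k.+1) A0 ^+ i *m B *m X i in HX.
exists (fun i => if i is j.+1 then X j else F *m S).
rewrite big_ord_recl /= exprS -mulmxE -mulmxA HX mulmxDl.
rewrite expr0 mul1mx addrC; congr (_ + _); first by rewrite mulmxA.
rewrite /S mulmx_sumr; apply: eq_bigr => i _.
by rewrite /bump /= exprS -mulmxE !mulmxA.
Qed.

Lemma krylov_o p q (A0 : 'M[R]_p) (C : 'M[R]_(q, p)) (G : 'M[R]_(p, q)) k :
  exists X : nat -> 'M[R]_q,
    C *m (A0 + G *m C) ^+ k = \sum_(i < k.+1) X i *m C *m A0 ^+ i.
Proof.
elim: k => [|k [X HX]].
  exists (fun _ => 1%:M); rewrite big_ord1 !expr0 mul1mx //.
set S := \sum_(i < k.+1) X i *m C *m A0 ^+ i in HX.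
exists (fun i => if i is j.+1 then X j else S *m G).
rewrite big_ord_recl /= exprSr -mulmxE mulmxA HX mulmxDr.
rewrite expr0 mulmx1 addrC; congr (_ + _); first by rewrite !mulmxA.
rewrite /S mulmx_suml; apply: eq_bigr => i _.
by rewrite /bump /= exprSr -mulmxE !mulmxA.
Qed.

Lemma col_incl p q N (A0 : 'M[R]_p) (B : 'M[R]_(p, q)) (F : 'M[R]_(q, p)) v :
  colspace (ctrb N (A0 + B *m F) B) v -> colspace (ctrb N A0 B) v.
Proof.
move=> [u ->].
have : forall k : 'I_N, exists Y : 'M[R]_(\sum_(k < N) q, q),
    (A0 + B *m F) ^+ k *m B = ctrb N A0 B *m Y.
  move=> k; have [X HX] := krylov_c A0 B F k.
  exists (\mxcol_(i < N) (if (i <= k)%N then X i else 0)).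
  rewrite HX /ctrb mul_mxrow_mxcol.
  rewrite (big_ord_widen N (fun i => A0 ^+ i *m B *m X i) (ltn_ord k)) big_mkcond.
  apply: eq_bigr => i _ /=; rewrite ltnS.
  by case: ifP => _; rewrite ?mulmx0.
move=> /fin_all_exists [Y HY].
exists ((\mxrow_k Y k) *m u); rewrite mulmxA mul_mxrow; congr (_ *m _).
by rewrite /ctrb; apply: eq_mxrow => k; rewrite HY.
Qed.

Lemma null_incl p q N (A0 : 'M[R]_p) (C : 'M[R]_(q, p)) (G : 'M[R]_(p, q)) v :
  nullspace (obsv N A0 C) v -> nullspace (obsv N (A0 + G *m C) C) v.
Proof.
rewrite /nullspace /obsv !mxcol_mul => H0.
have H : forall i : 'I_N, C *m A0 ^+ i *m v = 0.
  by move=> i; rewrite -(mxcolK (fun i : 'I_N => C *m A0 ^+ i *m v) i) H0 submxcol0.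
rewrite -(mxcol0 (p_ := fun _ : 'I_N => q)); apply: eq_mxcol => k.
have [X HX] := krylov_o A0 C G k.
rewrite HX mulmx_suml big1 // => i _.
by rewrite -!mulmxA (mulmxA C) (H (widen_ord (ltn_ord k) i)) mulmx0.
Qed.

Lemma final p q N (A A0 : 'M[R]_p) (B : 'M[R]_(p, q)) (C : 'M[R]_(q, p))
  (F : 'M[R]_(q, p)) (G : 'M[R]_(p, q)) :
  (A = A0 + B *m F) -> (A = A0 + G *m C) ->
  (forall v, colspace (ctrb N A0 B) v <-> colspace (ctrb N A B) v) /\
  (forall v, nullspace (obsv N A0 C) v <-> nullspace (obsv N A C) v).
Proof.
move=> EA EB.
have EA0 : A0 = A + B *m (- F) by rewrite EA mulmxN addrK.
have EB0 : A0 = A + (- G) *m C by rewrite EB mulNmx addrK.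
split => v; split => h.
- by have := @col_incl _ _ N A B (-F) v; rewrite -EA0; apply.
- by have := @col_incl _ _ N A0 B F v; rewrite -EA; apply.
- by have := @null_incl _ _ N A0 C G v; rewrite -EB; apply.
- by have := @null_incl _ _ N A C (-G) v; rewrite -EB0; apply.
Qed.

End Helpers.

Lemma EA_lem (R : realType) (n m : nat) (Rm : 'M[R]_(n + n)) (C : 'M[R]_(m + m, n + n)) (Sigma : 'M[R]_(m + m)) :
  Sigma *m sharp Sigma = 1%:M ->
  Jmx n *m Rm - 2^-1 *: (sharp C *m C) = Jmx n *m Rm + (- (sharp C *m Sigma)) *m (2^-1 *: (sharp Sigma *m C)).
Proof.
move=> HS.
rewrite (mulNmx (sharp C *m Sigma)) -(scalemxAr _ (sharp C *m Sigma)).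
by rewrite (mulmxA (sharp C *m Sigma)) -(mulmxA (sharp C) Sigma) HS mulmx1.
Qed.

Lemma EB_lem (R : realType) (n m : nat) (Rm : 'M[R]_(n + n)) (C : 'M[R]_(m + m, n + n)) :
  Jmx n *m Rm - 2^-1 *: (sharp C *m C) = Jmx n *m Rm + (- (2^-1 *: sharp C)) *m C.
Proof. by rewrite (mulNmx (2^-1 *: sharp C)) -(scalemxAl _ (sharp C)). Qed.

Theorem lemma1 (R : realType) (n m : nat) (hn : (1 <= n)%N) (hm : (1 <= m)%N)
  (Rm : 'M[R]_(n + n)) (C : 'M[R]_(m + m, n + n)) (Sigma : 'M[R]_(m + m)) :
  Rm^T = Rm -> symplectic Sigma ->
  let A := Jmx n *m Rm - 2^-1 *: (sharp C *m C) in
  let B := - (sharp C *m Sigma) in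
  let N := (n + n)%N in
  (forall v, colspace (ctrb N (Jmx n *m Rm) B) v <-> colspace (ctrb N A B) v) /\
  (forall v, nullspace (obsv N (Jmx n *m Rm) C) v <-> nullspace (obsv N A C) v).
Proof.
move=> _ [HS _] A B N.
exact (final N (@EA_lem R n m Rm C Sigma HS) (@EB_lem R n m Rm C)).
Qed.
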